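(* Let $\mathbb C$ be a homological category with finite colimits, and let $x\colon X\to A$, $y\colon Y\to A$ be morphisms whose images are normal monomorphisms. Then the following are equivalent: (a) the span $A/X\leftarrow A\to A/Y$ admits an internal pregroupoid structure; (b) the span $A/X\leftarrow A\to A/Y$ admits a unique internal pregroupoid structure; (c) $[(X,x),(Y,y)]_1=0$.
   Context: A homological category is a regular pointed category in which the Split Short Five Lemma holds; images are taken in the (regular epi, mono) factorization; a normal monomorphism is a kernel of some morphism. Notation: $\iota_i$ coproduct injections, $[a,b,c]$ copairing, $\langle\cdot\rangle$ pairing. $A_3=A\times_{A/X}A\times_{A/Y}A$ is the limit of $A\xrightarrow{\mathsf{coker}(x)}A/X\xleftarrow{\mathsf{coker}(x)}A\xrightarrow{\mathsf{coker}(y)}A/Y\xleftarrow{\mathsf{coker}(y)}A$. An internal pregroupoid structure on the span $A/X\leftarrow A\to A/Y$ is a morphism $p\colon A_3\to A$ with $p\langle\pi_1,\pi_2,\pi_2\rangle=\pi_1$ on $A\times_{A/X}A$ and $p\langle\pi_1,\pi_1,\pi_2\rangle=\pi_2$ on $A\times_{A/Y}A$ ($\pi_1,\pi_2$ the kernel-pair projections). $[(X,x),(Y,y)]_1$ denotes the $1$-weighted subobject commutator: the image under $[1_A,x,y]\colon A+X+Y\to A$ of the kernel of $\langle [\iota_1,\iota_2,0],[\iota_1,0,\iota_2]\rangle\colon A+X+Y\to (A+X)\times_A(A+Y)$, where $(A+X)\times_A(A+Y)$ is the pullback of $[1,0]\colon A+X\to A$ and $[1,0]\colon A+Y\to A$;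 ''$=0$'' means it is the zero subobject. *)

(* Defs.v *)
Set Implicit Arguments.
Unset Strict Implicit.

Record Category := {
  Ob :> Type;
  Hom : Ob -> Ob -> Type;
  idm : forall A, Hom A A;
  comp : forall A B D, Hom B D -> Hom A B -> Hom A D;
  comp_idl : forall A B (f : Hom A B), comp (idm B) f = f;
  comp_idr : forall A B (f : Hom A B), comp f (idm A) = f;
  comp_assoc : forall A B D E (h : Hom D E) (g : Hom B D) (f : Hom A B),
      comp h (comp g f) = comp (comp h g) f
}.

Arguments Hom {c} _ _.
Arguments idm {c} _.
Arguments comp {c A B D} _ _.
Notation "g ∘ f" := (comp g f) (at level 40, left associativity).

Section Cat.
Variable C : Category.

Definition mono {B D : C} (m : Hom B D) : Prop :=
  forall Z (g h : Hom Z B), m ∘ g = m ∘ h -> g = h.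

Definition is_iso {A B : C} (f : Hom A B) : Prop :=
  exists g : Hom B A, g ∘ f = idm A /\ f ∘ g = idm B.

Definition is_terminal (T : C) : Prop := forall A : C, exists! u : Hom A T, True.
Definition is_initial (I : C) : Prop := forall A : C, exists! u : Hom I A, True.
Definition is_zero_obj (Z : C) : Prop := is_initial Z /\ is_terminal Z.

Definition pointed : Prop := exists Z : C, is_zero_obj Z.

Definition is_zero_arrow {A B : C} (f : Hom A B) : Prop :=
  exists Z : C, is_zero_obj Z /\ exists (u : Hom A Z) (v : Hom Z B), f = v ∘ u.

Definition is_pullback {A B D P : C} (f : Hom A D) (g : Hom B D)
    (p1 : Hom P A) (p2 : Hom P B) : Prop :=
  f ∘ p1 = g ∘ p2 /\
  forall Q (q1 : Hom Q A) (q2 : Hom Q B), f ∘ q1 = g ∘ q2 ->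
    exists! u : Hom Q P, p1 ∘ u = q1 /\ p2 ∘ u = q2.

Definition has_finite_limits : Prop :=
  (exists T : C, is_terminal T) /\
  (forall A B D (f : Hom A D) (g : Hom B D),
      exists P (p1 : Hom P A) (p2 : Hom P B), is_pullback f g p1 p2).

Definition is_kernel {K A B : C} (k : Hom K A) (f : Hom A B) : Prop :=
  is_zero_arrow (f ∘ k) /\
  forall Z (g : Hom Z A), is_zero_arrow (f ∘ g) -> exists! u : Hom Z K, k ∘ u = g.

Definition normal_mono {B D : C} (m : Hom B D) : Prop :=
  exists E (g : Hom D E), is_kernel m g.

Definition is_coequalizer {A B Q : C} (f g : Hom A B) (q : Hom B Q) : Prop :=
  q ∘ f = q ∘ g /\
  forall Z (h : Hom B Z), h ∘ f = h ∘ g -> exists! u : Hom Q Z, u ∘ q = h.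

Definition is_cokernel {A B Q : C} (f : Hom A B) (q : Hom B Q) : Prop :=
  is_zero_arrow (q ∘ f) /\
  forall Z (g : Hom B Z), is_zero_arrow (g ∘ f) -> exists! u : Hom Q Z, u ∘ q = g.

Definition is_coproduct {A B S : C} (i1 : Hom A S) (i2 : Hom B S) : Prop :=
  forall Z (f : Hom A Z) (g : Hom B Z),
    exists! u : Hom S Z, u ∘ i1 = f /\ u ∘ i2 = g.

Definition is_coproduct3 {A B D S : C} (i1 : Hom A S) (i2 : Hom B S) (i3 : Hom D S)
  : Prop :=
  forall Z (f : Hom A Z) (g : Hom B Z) (h : Hom D Z),
    exists! u : Hom S Z, u ∘ i1 = f /\ u ∘ i2 = g /\ u ∘ i3 = h.

Definition has_finite_colimits : Prop :=
  (exists I : C, is_initial I) /\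
  (forall A B : C, exists S (i1 : Hom A S) (i2 : Hom B S), is_coproduct i1 i2) /\
  (forall A B (f g : Hom A B), exists Q (q : Hom B Q), is_coequalizer f g q).

Definition is_regular_epi {B D : C} (e : Hom B D) : Prop :=
  exists K (f g : Hom K B), is_coequalizer f g e.

Definition regular : Prop :=
  has_finite_limits /\
  (forall A B (f : Hom A B) P (p1 p2 : Hom P A), is_pullback f f p1 p2 ->
      exists Q (q : Hom A Q), is_coequalizer p1 p2 q) /\
  (forall A B D (f : Hom A D) (e : Hom B D) P (p1 : Hom P A) (p2 : Hom P B),
      is_pullback f e p1 p2 -> is_regular_epi e -> is_regular_epi p1).

Definition split_short_five : Prop :=
  forall (K A B K' A' B' : C)
    (k : Hom K A) (p : Hom A B) (s : Hom B A)
    (k' : Hom K' A') (p' : Hom A' B') (s' : Hom B' A')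
    (u : Hom K K') (v : Hom A A') (w : Hom B B'),
    p ∘ s = idm B -> is_kernel k p ->
    p' ∘ s' = idm B' -> is_kernel k' p' ->
    v ∘ k = k' ∘ u -> p' ∘ v = w ∘ p -> v ∘ s = s' ∘ w ->
    is_iso u -> is_iso w -> is_iso v.

Definition homological : Prop := pointed /\ regular /\ split_short_five.

Definition image_factorization {A B I : C} (f : Hom A B) (e : Hom A I) (m : Hom I B)
  : Prop := f = m ∘ e /\ is_regular_epi e /\ mono m.

Definition image_is_normal_mono {A B : C} (f : Hom A B) : Prop :=
  exists I (e : Hom A I) (m : Hom I B), image_factorization f e m /\ normal_mono m.

(* (A3; a1,a2,a3) is the limit of  A -qx-> A/X <-qx- A -qy-> A/Y <-qy- A *)
Definition is_A3 {A QX QY A3 : C} (qx : Hom A QX) (qy : Hom A QY)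
    (a1 a2 a3 : Hom A3 A) : Prop :=
  qx ∘ a1 = qx ∘ a2 /\ qy ∘ a2 = qy ∘ a3 /\
  forall Z (b1 b2 b3 : Hom Z A), qx ∘ b1 = qx ∘ b2 -> qy ∘ b2 = qy ∘ b3 ->
    exists! u : Hom Z A3, a1 ∘ u = b1 /\ a2 ∘ u = b2 /\ a3 ∘ u = b3.

(* p ∘ <π1,π2,π2> = π1 on A x_{A/X} A and p ∘ <π1,π1,π2> = π2 on A x_{A/Y} A;
   the pairings <...> are the unique induced maps into A3, characterised by
   their components. *)
Definition is_pregroupoid_structure {A A3 PX PY : C}
    (a1 a2 a3 : Hom A3 A) (px1 px2 : Hom PX A) (py1 py2 : Hom PY A)
    (p : Hom A3 A) : Prop :=
  (forall t : Hom PX A3, a1 ∘ t = px1 -> a2 ∘ t = px2 -> a3 ∘ t = px2 ->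
      p ∘ t = px1) /\
  (forall t : Hom PY A3, a1 ∘ t = py1 -> a2 ∘ t = py1 -> a3 ∘ t = py2 ->
      p ∘ t = py2).

(* For any choice of the cokernels A/X, A/Y, of A3 and of the kernel pairs,
   a pregroupoid structure exists. *)
Definition admits_pregroupoid {X Y A : C} (x : Hom X A) (y : Hom Y A) : Prop :=
  forall QX (qx : Hom A QX) QY (qy : Hom A QY),
    is_cokernel x qx -> is_cokernel y qy ->
  forall A3 (a1 a2 a3 : Hom A3 A), is_A3 qx qy a1 a2 a3 ->
  forall PX (px1 px2 : Hom PX A), is_pullback qx qx px1 px2 ->
  forall PY (py1 py2 : Hom PY A), is_pullback qy qy py1 py2 ->
  exists p : Hom A3 A, is_pregroupoid_structure a1 a2 a3 px1 px2 py1 py2 p.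

Definition admits_unique_pregroupoid {X Y A : C} (x : Hom X A) (y : Hom Y A)
  : Prop :=
  forall QX (qx : Hom A QX) QY (qy : Hom A QY),
    is_cokernel x qx -> is_cokernel y qy ->
  forall A3 (a1 a2 a3 : Hom A3 A), is_A3 qx qy a1 a2 a3 ->
  forall PX (px1 px2 : Hom PX A), is_pullback qx qx px1 px2 ->
  forall PY (py1 py2 : Hom PY A), is_pullback qy qy py1 py2 ->
  exists! p : Hom A3 A, is_pregroupoid_structure a1 a2 a3 px1 px2 py1 py2 p.

Definition commutator1_is_zero {X Y A : C} (x : Hom X A) (y : Hom Y A) : Prop :=
  forall S (i1 : Hom A S) (i2 : Hom X S) (i3 : Hom Y S), is_coproduct3 i1 i2 i3 ->
  forall SX (j1 : Hom A SX) (j2 : Hom X SX), is_coproduct j1 j2 ->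
  forall SY (l1 : Hom A SY) (l2 : Hom Y SY), is_coproduct l1 l2 ->
  forall (rX : Hom SX A), rX ∘ j1 = idm A -> is_zero_arrow (rX ∘ j2) ->
  forall (rY : Hom SY A), rY ∘ l1 = idm A -> is_zero_arrow (rY ∘ l2) ->
  forall P (pr1 : Hom P SX) (pr2 : Hom P SY), is_pullback rX rY pr1 pr2 ->
  forall (phi : Hom S P),
    pr1 ∘ phi ∘ i1 = j1 -> pr1 ∘ phi ∘ i2 = j2 -> is_zero_arrow (pr1 ∘ phi ∘ i3) ->
    pr2 ∘ phi ∘ i1 = l1 -> is_zero_arrow (pr2 ∘ phi ∘ i2) -> pr2 ∘ phi ∘ i3 = l2 ->
  forall K (k : Hom K S), is_kernel k phi ->
  forall (c : Hom S A), c ∘ i1 = idm A -> c ∘ i2 = x -> c ∘ i3 = y ->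
  exists I (e : Hom K I) (m : Hom I A),
    image_factorization (c ∘ k) e m /\ is_zero_obj I.

End Cat.

(* Main.v *)
Require Import Defs.
From Stdlib Require Import ClassicalEpsilon.
Set Implicit Arguments.
Unset Strict Implicit.

Section Basic.
Variable C : Category.

Lemma cA (A B D E : C) (h : Hom D E) (g : Hom B D) (f : Hom A B) :
  h ∘ (g ∘ f) = h ∘ g ∘ f.
Proof. apply comp_assoc. Qed.

Lemma cut_r (A B D E : C) (f : Hom B D) (g : Hom A B) (h : Hom A D) (u : Hom E A) :
  f ∘ g = h -> f ∘ g ∘ u = h ∘ u.
Proof. intros ->; reflexivity. Qed.

Lemma pb_ext {A B D P : C} (f : Hom A D) (g : Hom B D) (p1 : Hom P A) (p2 : Hom P B) :
  is_pullback f g p1 p2 -> forall Q (u v : Hom Q P), p1 ∘ u = p1 ∘ v -> p2 ∘ u = p2 ∘ v -> u = v.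
Proof.
  intros [Hc H] Q u v E1 E2.
  destruct (H Q (p1 ∘ u) (p2 ∘ u)) as [w [_ Hw]].
  { rewrite !cA, Hc; reflexivity. }
  transitivity w; [symmetry|]; apply Hw; auto.
Qed.

Lemma pb_pair {A B D P : C} (f : Hom A D) (g : Hom B D) (p1 : Hom P A) (p2 : Hom P B) :
  is_pullback f g p1 p2 -> forall Q (q1 : Hom Q A) (q2 : Hom Q B), f ∘ q1 = g ∘ q2 ->
  exists u, p1 ∘ u = q1 /\ p2 ∘ u = q2.
Proof. intros [_ H] Q q1 q2 E. destruct (H Q q1 q2 E) as [u [Hu _]]. eauto. Qed.

Lemma pb_sym {A B D P : C} (f : Hom A D) (g : Hom B D) (p1 : Hom P A) (p2 : Hom P B) :
  is_pullback f g p1 p2 -> is_pullback g f p2 p1.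
Proof.
  intros [Hc H]. split; [auto|]. intros Q q1 q2 E.
  destruct (H Q q2 q1 (eq_sym E)) as [u [[H1 H2] Hu]].
  exists u; split; [auto|]. intros v [? ?]; apply Hu; auto.
Qed.

Lemma A3_ext {A QX QY A3 : C} (qx : Hom A QX) (qy : Hom A QY) (a1 a2 a3 : Hom A3 A) :
  is_A3 qx qy a1 a2 a3 -> forall Z (u v : Hom Z A3),
  a1 ∘ u = a1 ∘ v -> a2 ∘ u = a2 ∘ v -> a3 ∘ u = a3 ∘ v -> u = v.
Proof.
  intros [H1 [H2 H]] Z u v E1 E2 E3.
  destruct (H Z (a1 ∘ u) (a2 ∘ u) (a3 ∘ u)) as [w [_ Hw]].
  { rewrite !cA, H1; reflexivity. }
  { rewrite !cA, H2; reflexivity. }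
  transitivity w; [symmetry|]; apply Hw; auto.
Qed.

Lemma A3_pair {A QX QY A3 : C} (qx : Hom A QX) (qy : Hom A QY) (a1 a2 a3 : Hom A3 A) :
  is_A3 qx qy a1 a2 a3 -> forall Z (b1 b2 b3 : Hom Z A), qx ∘ b1 = qx ∘ b2 -> qy ∘ b2 = qy ∘ b3 ->
  exists u, a1 ∘ u = b1 /\ a2 ∘ u = b2 /\ a3 ∘ u = b3.
Proof. intros [_ [_ H]] Z b1 b2 b3 E1 E2. destruct (H Z b1 b2 b3 E1 E2) as [u [Hu _]]; eauto. Qed.

Lemma cop_ext {A B S : C} (i1 : Hom A S) (i2 : Hom B S) : is_coproduct i1 i2 ->
  forall Z (u v : Hom S Z), u ∘ i1 = v ∘ i1 -> u ∘ i2 = v ∘ i2 -> u = v.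
Proof.
  intros H Z u v E1 E2. destruct (H Z (u ∘ i1) (u ∘ i2)) as [w [_ Hw]].
  transitivity w; [symmetry|]; apply Hw; auto.
Qed.

Lemma cop_pair {A B S : C} (i1 : Hom A S) (i2 : Hom B S) : is_coproduct i1 i2 ->
  forall Z (f : Hom A Z) (g : Hom B Z), exists u, u ∘ i1 = f /\ u ∘ i2 = g.
Proof. intros H Z f g. destruct (H Z f g) as [u [Hu _]]; eauto. Qed.

Lemma cop3_ext {A B D S : C} (i1 : Hom A S) (i2 : Hom B S) (i3 : Hom D S) : is_coproduct3 i1 i2 i3 ->
  forall Z (u v : Hom S Z), u ∘ i1 = v ∘ i1 -> u ∘ i2 = v ∘ i2 -> u ∘ i3 = v ∘ i3 -> u = v.
Proof.
  intros H Z u v E1 E2 E3. destruct (H Z (u ∘ i1) (u ∘ i2) (u ∘ i3)) as [w [_ Hw]].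
  transitivity w; [symmetry|]; apply Hw; auto.
Qed.

Lemma cop3_pair {A B D S : C} (i1 : Hom A S) (i2 : Hom B S) (i3 : Hom D S) : is_coproduct3 i1 i2 i3 ->
  forall Z (f : Hom A Z) (g : Hom B Z) (h : Hom D Z), exists u, u ∘ i1 = f /\ u ∘ i2 = g /\ u ∘ i3 = h.
Proof. intros H Z f g h. destruct (H Z f g h) as [u [Hu _]]; eauto. Qed.

Lemma coeq_epi {A B Q : C} (f g : Hom A B) (q : Hom B Q) : is_coequalizer f g q ->
  forall Z (u v : Hom Q Z), u ∘ q = v ∘ q -> u = v.
Proof.
  intros [Hc H] Z u v E. destruct (H Z (u ∘ q)) as [w [_ Hw]].
  { rewrite <- !cA, Hc; reflexivity. }
  transitivity w; [symmetry|]; apply Hw; auto.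
Qed.

Lemma regepi_epi {B D : C} (e : Hom B D) : is_regular_epi e ->
  forall Z (u v : Hom D Z), u ∘ e = v ∘ e -> u = v.
Proof. intros [K [f [g H]]]. eapply coeq_epi; eauto. Qed.

Lemma regepi_strong {B D M E0 : C} (e : Hom B D) (m : Hom M E0) (a : Hom B M) (b : Hom D E0) :
  is_regular_epi e -> mono m -> m ∘ a = b ∘ e -> exists d, m ∘ d = b.
Proof.
  intros [K [f [g [Hc H]]]] Hm E.
  destruct (H M a) as [d [Hd _]].
  { apply Hm. rewrite !cA, E, <- !cA, Hc; reflexivity. }
  exists d. eapply coeq_epi. split; [exact Hc| exact H].
  rewrite <- cA, Hd, E; reflexivity.
Qed.

Lemma iso_inv {A B : C} (f : Hom A B) : is_iso f -> forall Z (u v : Hom B Z), u ∘ f = v ∘ f -> u = v.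
Proof.
  intros [g [H1 H2]] Z u v E.
  rewrite <- (comp_idr u), <- (comp_idr v), <- H2, !cA, E; reflexivity.
Qed.

End Basic.
Set Implicit Arguments.
Unset Strict Implicit.

Section Zero.
Variable C : Category.
Hypothesis Hpt : pointed C.

Lemma zobj_in {Z : C} : is_zero_obj Z -> forall A (u v : Hom A Z), u = v.
Proof.
  intros [_ Ht] A u v. destruct (Ht A) as [w [_ Hw]].
  transitivity w; [symmetry|]; apply Hw; auto.
Qed.

Lemma zobj_out {Z : C} : is_zero_obj Z -> forall A (u v : Hom Z A), u = v.
Proof.
  intros [Hi _] A u v. destruct (Hi A) as [w [_ Hw]].
  transitivity w; [symmetry|]; apply Hw; auto.
Qed.

Lemma zobj_to {Z : C} : is_zero_obj Z -> forall A, exists u : Hom A Z, True.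
Proof. intros [_ Ht] A. destruct (Ht A) as [w _]; eauto. Qed.
Lemma zobj_from {Z : C} : is_zero_obj Z -> forall A, exists u : Hom Z A, True.
Proof. intros [Hi _] A. destruct (Hi A) as [w _]; eauto. Qed.

Lemma zero_exists (A B : C) : exists f : Hom A B, is_zero_arrow f.
Proof.
  destruct Hpt as [Z HZ]. destruct (zobj_to HZ A) as [u _]. destruct (zobj_from HZ B) as [v _].
  exists (v ∘ u). exists Z; split; eauto.
Qed.

Lemma zero_uniq {A B : C} (f g : Hom A B) : is_zero_arrow f -> is_zero_arrow g -> f = g.
Proof.
  intros [Z [HZ [u [v ->]]]] [Z' [HZ' [u' [v' ->]]]].
  destruct (zobj_from HZ Z') as [h _].
  rewrite (zobj_in HZ' u' (h ∘ u)), (zobj_out HZ v (v' ∘ h)), cA; reflexivity.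
Qed.

Lemma zero_post {A B D : C} (f : Hom A B) (g : Hom B D) : is_zero_arrow f -> is_zero_arrow (g ∘ f).
Proof. intros [Z [HZ [u [v ->]]]]. exists Z; split; auto. exists u, (g ∘ v). apply cA. Qed.

Lemma zero_pre {A B D : C} (f : Hom B D) (g : Hom A B) : is_zero_arrow f -> is_zero_arrow (f ∘ g).
Proof. intros [Z [HZ [u [v ->]]]]. exists Z; split; auto. exists (u ∘ g), v. symmetry; apply cA. Qed.

Lemma zero_through {A B Z : C} (u : Hom A Z) (v : Hom Z B) : is_zero_obj Z -> is_zero_arrow (v ∘ u).
Proof. intros HZ. exists Z; split; eauto. Qed.

Definition zr (A B : C) : Hom A B :=
  proj1_sig (constructive_indefinite_description _ (zero_exists A B)).
Lemma zr_zero (A B : C) : is_zero_arrow (zr A B).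
Proof. unfold zr. destruct constructive_indefinite_description; auto. Qed.

Lemma zero_is_zr {A B : C} (f : Hom A B) : is_zero_arrow f -> f = zr A B.
Proof. intro H; apply zero_uniq; auto using zr_zero. Qed.

Lemma zeq {A B : C} (f g : Hom A B) : is_zero_arrow f -> is_zero_arrow g -> f = g.
Proof. apply zero_uniq. Qed.

Lemma kernel_mono {K A B : C} (k : Hom K A) (f : Hom A B) : is_kernel k f -> mono k.
Proof.
  intros [Hz H] Z g h E. destruct (H Z (k ∘ g)) as [w [_ Hw]].
  { rewrite cA. apply zero_pre; auto. }
  transitivity w; [symmetry|]; apply Hw; auto.
Qed.

Lemma kernel_fact {K A B : C} (k : Hom K A) (f : Hom A B) : is_kernel k f ->
  forall Z (g : Hom Z A), is_zero_arrow (f ∘ g) -> exists u, k ∘ u = g.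
Proof. intros [_ H] Z g E. destruct (H Z g E) as [u [Hu _]]; eauto. Qed.

Hypothesis Hlim : has_finite_limits C.

Lemma pb_exists {A B D : C} (f : Hom A D) (g : Hom B D) :
  exists P (p1 : Hom P A) (p2 : Hom P B), is_pullback f g p1 p2.
Proof. apply (proj2 Hlim). Qed.

Lemma kernel_exists {A B : C} (f : Hom A B) : exists K (k : Hom K A), is_kernel k f.
Proof.
  destruct Hpt as [Z HZ]. destruct (zobj_from HZ B) as [z _].
  destruct (pb_exists f z) as [P [k [t Hp]]].
  exists P, k. split.
  - rewrite (proj1 Hp). apply zero_through; auto.
  - intros W g Hg. destruct (zobj_to HZ W) as [t' _].
    assert (E : f ∘ g = z ∘ t') by (apply zeq; auto; apply zero_through; auto).
    destruct (pb_pair Hp E) as [u [Hu1 Hu2]]. exists u; split; auto.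
    intros u' Hu'. eapply (pb_ext Hp). congruence. apply (zobj_in HZ).
Qed.

Lemma equalizer_exists {E W : C} (f g : Hom E W) :
  exists M (m : Hom M E), mono m /\ f ∘ m = g ∘ m /\
    forall Z (h : Hom Z E), f ∘ h = g ∘ h -> exists h', m ∘ h' = h.
Proof.
  destruct Hpt as [Z HZ]. destruct (zobj_to HZ E) as [tE _]. destruct (zobj_to HZ W) as [tW _].
  destruct (pb_exists tE tW) as [P [pi1 [pi2 Hp]]].
  assert (Hpair : forall Q (a : Hom Q E) (b : Hom Q W), exists u, pi1 ∘ u = a /\ pi2 ∘ u = b).
  { intros Q a b. apply (pb_pair Hp). apply (zobj_in HZ). }
  destruct (Hpair E (idm E) f) as [uf [Uf1 Uf2]].
  destruct (Hpair E (idm E) g) as [ug [Ug1 Ug2]].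
  destruct (pb_exists uf ug) as [Q [q1 [q2 Hq]]].
  assert (E12 : q1 = q2).
  { pose proof (proj1 Hq) as Hc. transitivity (pi1 ∘ uf ∘ q1). rewrite Uf1, comp_idl; auto.
    rewrite <- cA, Hc, cA, Ug1, comp_idl; auto. }
  assert (Efg : f ∘ q1 = g ∘ q1).
  { rewrite <- Uf2, <- Ug2, <- !cA, (proj1 Hq), E12. reflexivity. }
  exists Q, q1. split; [|split; auto].
  - intros V a b Eab. eapply (pb_ext Hq); auto. rewrite <- E12; auto.
  - intros V h Eh. destruct (pb_pair Hq (q1:=h) (q2:=h)) as [u [Hu1 _]].
    + eapply (pb_ext Hp); rewrite !cA; [rewrite Uf1, Ug1; reflexivity|rewrite Uf2, Ug2; auto].
    + eauto.
Qed.

End Zero.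
Set Implicit Arguments.
Unset Strict Implicit.

Section T.
Variable C : Category.
Lemma e2 {A B D E : C} (f : Hom B D) (g : Hom A B) (h : Hom A D) :
  f ∘ g = h -> forall (u : Hom E A), f ∘ (g ∘ u) = h ∘ u.
Proof. intros H u; rewrite cA, H; auto. Qed.
Lemma e3 {A B D E F : C} (f : Hom D E) (g : Hom B D) (k : Hom A B) (h : Hom A E) :
  f ∘ (g ∘ k) = h -> forall (u : Hom F A), f ∘ (g ∘ (k ∘ u)) = h ∘ u.
Proof. intros H u; rewrite (cA g k u), cA, H; auto. Qed.
Lemma e4 {A B D E F G : C} (f : Hom E F) (g : Hom D E) (k : Hom B D) (l : Hom A B) (h : Hom A F) :
  f ∘ (g ∘ (k ∘ l)) = h -> forall (u : Hom G A), f ∘ (g ∘ (k ∘ (l ∘ u))) = h ∘ u.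
Proof. intros H u; rewrite (cA k l u), (cA g (k ∘ l) u), cA, H; auto. Qed.
Lemma zp2 {A B D E : C} (f : Hom B D) (g : Hom A B) (u : Hom E A) :
  is_zero_arrow (f ∘ g) -> is_zero_arrow (f ∘ (g ∘ u)).
Proof. intros H; rewrite cA; apply zero_pre; auto. Qed.
Lemma zp3 {A B D E F : C} (f : Hom D E) (g : Hom B D) (k : Hom A B) (u : Hom F A) :
  is_zero_arrow (f ∘ (g ∘ k)) -> is_zero_arrow (f ∘ (g ∘ (k ∘ u))).
Proof. intros H; rewrite (cA g k u), cA; apply zero_pre; auto. Qed.
End T.

Ltac rn := repeat rewrite <- cA; rewrite ?comp_idl, ?comp_idr.
Ltac rnh H := repeat rewrite <- cA in H.
Ltac rw H := first [rewrite (e4 H) | rewrite (e3 H) | rewrite (e2 H) | rewrite H]; rn.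
Ltac zt := first [ assumption | apply zr_zero | apply zero_through; assumption
  | (apply zero_post; zt) | (apply zero_pre; zt) | (apply zp2; zt) | (apply zp3; zt) ].
Ltac zz := apply zeq; zt.
Set Implicit Arguments.
Unset Strict Implicit.

Section Proto.
Variable C : Category.
Hypothesis HC : homological C.
Let Hpt : pointed C := proj1 HC.
Let Hreg : regular C := proj1 (proj2 HC).
Let Hssf : split_short_five C := proj2 (proj2 HC).
Let Hlim : has_finite_limits C := proj1 Hreg.

Lemma iso_id (A : C) : is_iso (idm A).
Proof. exists (idm A); split; apply comp_idl. Qed.

Lemma L2_ext {K E B : C} (k : Hom K E) (p : Hom E B) (s : Hom B E) :
  p ∘ s = idm B -> is_kernel k p ->
  forall M (m : Hom M E), mono m -> (exists s', m ∘ s' = s) -> (exists k', m ∘ k' = k) -> is_iso m.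
Proof.
  intros Hps Hk M m Hm [s' Hs'] [k' Hk'].
  assert (Hmk : is_kernel k' (p ∘ m)).
  { split.
    - rewrite <- cA, Hk'. apply (proj1 Hk).
    - intros Z g Hg. rewrite <- cA in Hg. destruct (proj2 Hk Z (m ∘ g) Hg) as [u [Hu Hu']].
      exists u. split.
      + apply Hm. rewrite cA, Hk'; auto.
      + intros u' Hu2. apply Hu'. rewrite <- Hk', <- cA, Hu2; auto. }
  eapply (Hssf (k:=k') (p:=p ∘ m) (s:=s') (k':=k) (p':=p) (s':=s) (u:=idm K) (v:=m) (w:=idm B)); auto.
  - rewrite <- cA, Hs'; auto.
  - rewrite comp_idr; auto.
  - rewrite comp_idl; auto.
  - rewrite comp_idr; auto.
  - apply iso_id.
  - apply iso_id.
Qed.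

Lemma L2_epi {K E B W : C} (k : Hom K E) (p : Hom E B) (s : Hom B E) :
  p ∘ s = idm B -> is_kernel k p ->
  forall (f g : Hom E W), f ∘ s = g ∘ s -> f ∘ k = g ∘ k -> f = g.
Proof.
  intros Hps Hk f g Es Ek.
  destruct (equalizer_exists Hpt Hlim f g) as [M [m [Hm [Em Hu]]]].
  assert (Hi : is_iso m).
  { apply (L2_ext Hps Hk Hm); auto. }
  destruct Hi as [n [Hn1 Hn2]].
  rewrite <- (comp_idr f), <- (comp_idr g), <- Hn2, !cA, Em; auto.
Qed.

Lemma L2_zero {K E B W : C} (k : Hom K E) (p : Hom E B) (s : Hom B E) :
  p ∘ s = idm B -> is_kernel k p ->
  forall (f : Hom E W), is_zero_arrow (f ∘ s) -> is_zero_arrow (f ∘ k) -> is_zero_arrow f.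
Proof.
  intros Hps Hk f H1 H2. rewrite (L2_epi Hps Hk (f:=f) (g:=zr Hpt E W)).
  apply zr_zero. apply zeq; auto. apply zero_pre, zr_zero. apply zeq; auto. apply zero_pre, zr_zero.
Qed.

Lemma coeq_iso {A B Q Q' : C} (f g : Hom A B) (q : Hom B Q) (m : Hom Q Q') :
  is_coequalizer f g q -> is_iso m -> is_coequalizer f g (m ∘ q).
Proof.
  intros [Hc H] [n [Hn1 Hn2]]. split.
  - rewrite <- !cA, Hc; auto.
  - intros Z h Eh. destruct (H Z h Eh) as [u [Hu Hu']]. exists (u ∘ n). split.
    + rewrite <- cA, (cA n m q), Hn1, comp_idl; auto.
    + intros v Hv. rewrite (Hu' (v ∘ m)). rewrite <- cA, Hn2, comp_idr; auto.
      rewrite <- cA; auto.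
Qed.

Lemma extremal_regular {A B : C} (f : Hom A B) :
  (forall M (m : Hom M B) (t : Hom A M), mono m -> f = m ∘ t -> is_iso m) -> is_regular_epi f.
Proof.
  intros Hex.
  destruct (pb_exists Hlim f f) as [P [p1 [p2 Hp]]].
  destruct (proj1 (proj2 Hreg) _ _ f _ _ _ Hp) as [Q [e He]].
  destruct (proj2 He B f (proj1 Hp)) as [m [Hm _]].
  assert (Hmono : mono m).
  { destruct (pb_exists Hlim m m) as [N [n1 [n2 Hn]]].
    assert (En : n1 = n2).
    { destruct (pb_exists Hlim n1 e) as [W [w1 [w2 Hw]]].
      destruct (pb_exists Hlim (n2 ∘ w1) e) as [V [v1 [v2 Hv]]].
      assert (Rw := proj2 (proj2 Hreg) _ _ _ _ _ _ _ _ Hw (ex_intro _ P (ex_intro _ p1 (ex_intro _ p2 He)))).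
      assert (Rv := proj2 (proj2 Hreg) _ _ _ _ _ _ _ _ Hv (ex_intro _ P (ex_intro _ p1 (ex_intro _ p2 He)))).
      assert (Ef : f ∘ (w2 ∘ v1) = f ∘ v2).
      { rewrite <- Hm. pose proof (proj1 Hv) as Ev. pose proof (proj1 Hw) as Ew. pose proof (proj1 Hn) as En.
        transitivity (m ∘ (n1 ∘ w1 ∘ v1)). rewrite Ew, <- !cA; reflexivity.
        transitivity (m ∘ (n2 ∘ w1 ∘ v1)). rewrite !cA, En; reflexivity.
        rewrite Ev, cA; reflexivity. }
      destruct (pb_pair Hp Ef) as [r [Hr1 Hr2]].
      apply (regepi_epi Rw). apply (regepi_epi Rv).
      rewrite (proj1 Hw), (proj1 Hv), <- cA, <- Hr1, <- Hr2, !cA, (proj1 He). reflexivity. }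
    intros Z g h Egh. destruct (pb_pair Hn Egh) as [u [Hu1 Hu2]]. rewrite <- Hu1, <- Hu2, En; auto. }
  assert (Hiso := Hex Q m e Hmono (eq_sym Hm)).
  exists P, p1, p2. rewrite <- Hm. apply coeq_iso; auto.
Qed.

Lemma regepi_kp {A B P : C} (e : Hom A B) (p1 p2 : Hom P A) :
  is_regular_epi e -> is_pullback e e p1 p2 -> is_coequalizer p1 p2 e.
Proof.
  intros [K [u [v [Hc H]]]] Hp. split; [apply (proj1 Hp)|].
  intros Z h Eh. apply H.
  destruct (pb_pair Hp Hc) as [w [Hw1 Hw2]]. rewrite <- Hw1, <- Hw2, !cA, Eh; auto.
Qed.

Lemma regepi_factor {A B K W : C} (e : Hom A B) (k : Hom K A) (f : Hom A W) :
  is_regular_epi e -> is_kernel k e -> is_zero_arrow (f ∘ k) -> exists h, h ∘ e = f.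
Proof.
  intros He Hk Hfk.
  destruct (pb_exists Hlim e e) as [P [p1 [p2 Hp]]].
  destruct (proj2 (regepi_kp He Hp) W f) as [h [Hh _]].
  - destruct (pb_pair Hp (q1:=idm A) (q2:=idm A) eq_refl) as [d [Hd1 Hd2]].
    destruct (kernel_exists Hpt Hlim p2) as [L [kk Hkk]].
    apply (L2_epi (s:=d) Hd2 Hkk).
    + rewrite <- !cA, Hd1, Hd2; auto.
    + assert (Z2 : is_zero_arrow (p2 ∘ kk)) by apply (proj1 Hkk).
      assert (Z1 : is_zero_arrow (e ∘ (p1 ∘ kk))).
      { rewrite cA, (proj1 Hp), <- cA. apply zero_post; auto. }
      destruct (kernel_fact Hk Z1) as [w Hw].
      apply zeq. rewrite <- cA, <- Hw, cA. apply zero_pre; auto.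
      rewrite <- cA. apply zero_post; auto.
  - eauto.
Qed.

Lemma zero_image {K A : C} (f : Hom K A) : is_zero_arrow f ->
  exists I (e : Hom K I) (m : Hom I A), image_factorization f e m /\ is_zero_obj I.
Proof.
  intros Hf. destruct Hpt as [Z HZ].
  destruct (zobj_to HZ K) as [e _]. destruct (zobj_from HZ A) as [m _].
  exists Z, e, m. split; [|auto]. split; [|split].
  - apply zeq; auto. apply zero_through; auto.
  - exists K, (idm K), (zr Hpt K K). split.
    + apply (zobj_in HZ).
    + intros W h Eh. destruct (zobj_from HZ W) as [u _]. exists u. split.
      * apply zeq. apply zero_through; auto. rewrite <- (comp_idr h), Eh. apply zero_post, zr_zero.
      * intros; apply (zobj_out HZ).
  - intros W g h _. apply (zobj_in HZ).
Qed.

Hypothesis HF : has_finite_colimits C.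

Lemma coker_exists {X A : C} (x : Hom X A) : exists Q (q : Hom A Q), is_cokernel x q.
Proof.
  destruct (proj2 (proj2 HF) X A x (zr Hpt X A)) as [Q [q [Hc H]]].
  exists Q, q. split.
  - rewrite Hc. apply zero_post, zr_zero.
  - intros Z g Hg. apply H. apply zeq; auto. apply zero_post, zr_zero.
Qed.

Lemma cop_exists (A B : C) : exists S (i1 : Hom A S) (i2 : Hom B S), is_coproduct i1 i2.
Proof. apply (proj2 HF). Qed.

Lemma cop3_exists (A B D : C) : exists S (i1 : Hom A S) (i2 : Hom B S) (i3 : Hom D S), is_coproduct3 i1 i2 i3.
Proof.
  destruct (cop_exists A B) as [S1 [j1 [j2 H1]]].
  destruct (cop_exists S1 D) as [S [k1 [k2 H2]]].
  exists S, (k1 ∘ j1), (k1 ∘ j2), k2. intros Z f g h.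
  destruct (cop_pair H1 f g) as [u1 [U1 U2]].
  destruct (cop_pair H2 u1 h) as [u [V1 V2]].
  exists u. split.
  - rewrite !cA, V1; auto.
  - intros v [W1 [W2 W3]]. apply (cop_ext H2); [|congruence].
    apply (cop_ext H1); rewrite <- !cA; [rewrite W1, cA, V1; auto| rewrite W2, cA, V1; auto].
Qed.

End Proto.
Set Implicit Arguments.
Unset Strict Implicit.

Section Main.
Variable C : Category.
Hypothesis HC : homological C.
Let Hpt : pointed C := proj1 HC.
Let Hreg : regular C := proj1 (proj2 HC).
Let Hlim : has_finite_limits C := proj1 Hreg.

Lemma normal_ker {X A QX I : C} (x : Hom X A) (qx : Hom A QX) (e : Hom X I) (m : Hom I A) :
  is_cokernel x qx -> image_factorization x e m -> normal_mono m -> is_kernel m qx.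
Proof.
  intros [Hz Hq] [Ex [He Hm]] [E [g Hg]].
  split.
  - assert (qx ∘ m ∘ e = zr Hpt X QX).
    { rewrite <- cA, <- Ex. apply (zero_is_zr Hpt); auto. }
    replace (qx ∘ m) with (zr Hpt I QX). apply zr_zero.
    apply (regepi_epi He). rewrite H. apply zeq; first [apply zr_zero | apply zero_pre, zr_zero].
  - intros Z h Hh. apply (proj2 Hg).
    destruct (Hq E g) as [u [Hu _]].
    { rewrite Ex, cA. apply zero_pre, (proj1 Hg). }
    rewrite <- Hu, <- cA. apply zero_post; auto.
Qed.

Lemma A3_exists {A QX QY : C} (qx : Hom A QX) (qy : Hom A QY) :
  exists A3 (a1 a2 a3 : Hom A3 A), is_A3 qx qy a1 a2 a3.
Proof.
  destruct (pb_exists Hlim qx qx) as [PX [px1 [px2 HPX]]].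
  destruct (pb_exists Hlim qy qy) as [PY [py1 [py2 HPY]]].
  destruct (pb_exists Hlim px2 py1) as [W [w1 [w2 HW]]].
  exists W, (px1 ∘ w1), (px2 ∘ w1), (py2 ∘ w2). split; [|split].
  - rewrite !cA, (proj1 HPX); auto.
  - rewrite (proj1 HW), !cA, (proj1 HPY); auto.
  - intros Z b1 b2 b3 E1 E2.
    destruct (pb_pair HPX E1) as [u1 [U1 U2]].
    destruct (pb_pair HPY E2) as [u2 [V1 V2]].
    assert (E3 : px2 ∘ u1 = py1 ∘ u2) by congruence.
    destruct (pb_pair HW E3) as [u [W1 W2]].
    exists u. split.
    + rewrite <- !cA, W1, W2; auto.
    + intros v [X1 [X2 X3]]. apply (pb_ext HW).
      * rewrite W1. apply (pb_ext HPX); rewrite cA; congruence.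
      * rewrite W2. apply (pb_ext HPY); rewrite cA; [|congruence].
        rewrite <- (proj1 HW). congruence.
Qed.

Lemma kp_regepi {A Q I X0 P S : C} (q : Hom A Q) (pa pb : Hom P A) (m : Hom I A) (e : Hom X0 I)
  (g : Hom S P) (s1 : Hom A S) (s2 : Hom X0 S) :
  is_pullback q q pa pb -> is_kernel m q -> is_regular_epi e ->
  pa ∘ g ∘ s1 = idm A -> pb ∘ g ∘ s1 = idm A ->
  pa ∘ g ∘ s2 = m ∘ e -> is_zero_arrow (pb ∘ g ∘ s2) -> is_regular_epi g.
Proof.
  intros Hp Hm He G1 G2 G3 G4.
  apply (extremal_regular HC). intros M mm t Hmm Hg.
  destruct (pb_pair Hp (q1:=idm A) (q2:=idm A) eq_refl) as [d [D1 D2]].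
  destruct (kernel_exists Hpt Hlim pb) as [K [kk Hkk]].
  apply (L2_ext HC D2 Hkk Hmm).
  - exists (t ∘ s1). rewrite cA, <- Hg. apply (pb_ext Hp); rewrite ?cA; congruence.
  - destruct (pb_pair Hp (q1:=m) (q2:=zr Hpt I A)) as [u0 [U1 U2]].
    { apply zeq. apply (proj1 Hm). apply zero_post, zr_zero. }
    assert (Eu : mm ∘ (t ∘ s2) = u0 ∘ e).
    { rewrite cA, <- Hg. apply (pb_ext Hp); rewrite !cA, ?U1, ?U2, <- ?G3; auto.
      apply zeq; auto. apply zero_pre, zr_zero. }
    destruct (regepi_strong He Hmm Eu) as [dd Hdd].
    destruct (kernel_fact Hm (g:=pa ∘ kk)) as [w Hw].
    { rewrite cA, (proj1 Hp), <- cA. apply zero_post, (proj1 Hkk). }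
    exists (dd ∘ w). rewrite cA, Hdd. apply (pb_ext Hp); rewrite cA.
    + rewrite U1; auto.
    + rewrite U2. apply zeq. apply zero_pre, zr_zero. apply (proj1 Hkk).
Qed.

Lemma part_uniq {A QX QY A3 PX PY : C} (qx : Hom A QX) (qy : Hom A QY)
  (a1 a2 a3 : Hom A3 A) (px1 px2 : Hom PX A) (py1 py2 : Hom PY A) :
  is_A3 qx qy a1 a2 a3 -> is_pullback qx qx px1 px2 -> is_pullback qy qy py1 py2 ->
  forall p p', is_pregroupoid_structure a1 a2 a3 px1 px2 py1 py2 p ->
    is_pregroupoid_structure a1 a2 a3 px1 px2 py1 py2 p' -> p = p'.
Proof.
  intros HA3 HPX HPY p p' Hp Hp'.
  destruct (A3_pair HA3 (b1:=px1) (b2:=px2) (b3:=px2) (proj1 HPX) eq_refl) as [sR [R1 [R2 R3]]].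
  destruct (A3_pair HA3 (b1:=py1) (b2:=py1) (b3:=py2) eq_refl (proj1 HPY)) as [sS [S1 [S2 S3]]].
  destruct (pb_pair HPY (q1:=a2) (q2:=a3) (proj1 (proj2 HA3))) as [rho [P1 P2]].
  assert (Hrs : rho ∘ sS = idm PY).
  { apply (pb_ext HPY); rewrite cA, ?P1, ?P2, comp_idr; auto. }
  destruct (kernel_exists Hpt Hlim rho) as [K [kk Hkk]].
  apply (L2_epi HC Hrs Hkk).
  - rewrite (proj2 Hp sS S1 S2 S3), (proj2 Hp' sS S1 S2 S3); auto.
  - destruct (pb_pair HPX (q1:=a1 ∘ kk) (q2:=a2 ∘ kk)) as [w [W1 W2]].
    { rewrite !cA, (proj1 HA3); auto. }
    assert (Ek : sR ∘ w = kk).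
    { apply (A3_ext HA3); rewrite cA; [rewrite R1; auto|rewrite R2; auto|rewrite R3, W2].
      apply zeq; [rewrite <- P1|rewrite <- P2]; rewrite <- cA; apply zero_post, (proj1 Hkk). }
    rewrite <- Ek, !cA, (proj1 Hp sR R1 R2 R3), (proj1 Hp' sR R1 R2 R3); auto.
Qed.

End Main.
Set Implicit Arguments.
Unset Strict Implicit.

Section AC.
Variable C : Category.
Hypothesis HC : homological C.
Hypothesis HF : has_finite_colimits C.
Let Hpt : pointed C := proj1 HC.
Let Hreg : regular C := proj1 (proj2 HC).
Let Hlim : has_finite_limits C := proj1 Hreg.

Lemma part_ac {X Y A : C} (x : Hom X A) (y : Hom Y A) :
  admits_pregroupoid x y -> commutator1_is_zero x y.
Proof.
  intros Ha S i1 i2 i3 H3 SX j1 j2 HX SY l1 l2 HY rX RX1 RX2 rY RY1 RY2 P pr1 pr2 HP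
    phi F1 F2 F3 F4 F5 F6 K k Hk c C1 C2 C3.
  rnh F1; rnh F2; rnh F3; rnh F4; rnh F5; rnh F6.
  apply (zero_image HC).
  destruct (coker_exists HC HF x) as [QX [qx Hqx]].
  destruct (coker_exists HC HF y) as [QY [qy Hqy]].
  destruct (A3_exists HC qx qy) as [A3 [a1 [a2 [a3 HA3]]]].
  destruct (pb_exists Hlim qx qx) as [PX [px1 [px2 HPX]]].
  destruct (pb_exists Hlim qy qy) as [PY [py1 [py2 HPY]]].
  destruct (Ha QX qx QY qy Hqx Hqy A3 a1 a2 a3 HA3 PX px1 px2 HPX PY py1 py2 HPY) as [p Hp].
  pose proof (proj1 Hqx) as Hqx0. pose proof (proj1 Hqy) as Hqy0.
  pose proof (proj1 Hk) as Hk0.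
  destruct (cop_pair HX (idm A) x) as [fX [FX1 FX2]].
  destruct (cop_pair HY (idm A) y) as [fY [FY1 FY2]].
  assert (EX : qx ∘ fX = qx ∘ rX).
  { apply (cop_ext HX); rn; [rw FX1; rw RX1; auto | rw FX2; zz]. }
  assert (EY : qy ∘ rY = qy ∘ fY).
  { apply (cop_ext HY); rn; [rw FY1; rw RY1; auto | rw FY2; zz]. }
  pose proof (proj1 HP) as HP1.
  destruct (A3_pair HA3 (b1 := fX ∘ (pr1 ∘ phi)) (b2 := rX ∘ (pr1 ∘ phi)) (b3 := fY ∘ (pr2 ∘ phi)))
    as [psi [Psi1 [Psi2 Psi3]]].
  { rw EX; auto. }
  { rw HP1; rw EY; auto. }
  destruct (pb_pair HPX (q1 := idm A) (q2 := idm A) eq_refl) as [dX [D1 D2]].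
  destruct (A3_pair HA3 (b1:=px1) (b2:=px2) (b3:=px2) (proj1 HPX) eq_refl) as [sR [R1 [R2 R3]]].
  destruct (A3_pair HA3 (b1:=py1) (b2:=py1) (b3:=py2) eq_refl (proj1 HPY)) as [sS [S1 [S2 S3]]].
  pose proof (proj1 Hp sR R1 R2 R3) as HpR.
  pose proof (proj2 Hp sS S1 S2 S3) as HpS.
  destruct (pb_pair HPX (q1 := x) (q2 := zr Hpt X A)) as [uX [U1 U2]].
  { zz. }
  destruct (pb_pair HPY (q1 := zr Hpt Y A) (q2 := y)) as [vY [V1 V2]].
  { zz. }
  assert (Q1 : psi ∘ i1 = sR ∘ dX).
  { apply (A3_ext HA3); rn.
    - rw Psi1; rw F1; rw FX1; rw R1; rw D1; auto.
    - rw Psi2; rw F1; rw RX1; rw R2; rw D2; auto.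
    - rw Psi3; rw F4; rw FY1; rw R3; rw D2; auto. }
  assert (Q2 : psi ∘ i2 = sR ∘ uX).
  { apply (A3_ext HA3); rn.
    - rw Psi1; rw F2; rw FX2; rw R1; rw U1; auto.
    - rw Psi2; rw F2; rw R2; rw U2; zz.
    - rw Psi3; rw R3; rw U2; zz. }
  assert (Q3 : psi ∘ i3 = sS ∘ vY).
  { apply (A3_ext HA3); rn.
    - rw Psi1; rw S1; rw V1; zz.
    - rw Psi2; rw (proj1 HP). rw F6; rw S2; rw V1; zz.
    - rw Psi3; rw F6; rw FY2; rw S3; rw V2; auto. }
  assert (Epc : p ∘ psi = c).
  { apply (cop3_ext H3); rn.
    - rw Q1; rw HpR; rw D1; auto.
    - rw Q2; rw HpR; rw U1; auto.
    - rw Q3; rw HpS; rw V2; auto. }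
  assert (Epk : psi ∘ k = zr Hpt K A3).
  { apply (A3_ext HA3); rn; [rw Psi1|rw Psi2|rw Psi3]; zz. }
  rewrite <- Epc; rn; rw Epk; zt.
Qed.

End AC.
Set Implicit Arguments.
Unset Strict Implicit.

Section CA.
Variable C : Category.
Hypothesis HC : homological C.
Hypothesis HF : has_finite_colimits C.
Let Hpt : pointed C := proj1 HC.
Let Hreg : regular C := proj1 (proj2 HC).
Let Hlim : has_finite_limits C := proj1 Hreg.

Lemma part_ca {X Y A : C} (x : Hom X A) (y : Hom Y A) :
  image_is_normal_mono x -> image_is_normal_mono y ->
  commutator1_is_zero x y -> admits_pregroupoid x y.
Proof.
  intros [Ix [ex [mx [Fx Nx]]]] [Iy [ey [my [Fy Ny]]]] Hc
    QX qx QY qy Hqx Hqy A3 a1 a2 a3 HA3 PX px1 px2 HPX PY py1 py2 HPY.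
  pose proof (normal_ker HC Hqx Fx Nx) as KerX.
  pose proof (normal_ker HC Hqy Fy Ny) as KerY.
  destruct Fx as [Fx [Rex _]]. destruct Fy as [Fy [Rey _]].
  pose proof (proj1 Hqx) as Hqx0. pose proof (proj1 Hqy) as Hqy0.
  destruct (cop3_exists HF A X Y) as [S [i1 [i2 [i3 H3]]]].
  destruct (cop_exists HF A X) as [SX [j1 [j2 HX]]].
  destruct (cop_exists HF A Y) as [SY [l1 [l2 HY]]].
  destruct (cop_pair HX (idm A) (zr Hpt X A)) as [rX [RX1 RX2']].
  destruct (cop_pair HY (idm A) (zr Hpt Y A)) as [rY [RY1 RY2']].
  assert (RX2 : is_zero_arrow (rX ∘ j2)) by (rewrite RX2'; apply zr_zero).
  assert (RY2 : is_zero_arrow (rY ∘ l2)) by (rewrite RY2'; apply zr_zero).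
  clear RX2' RY2'.
  destruct (cop_pair HX (idm A) x) as [fX [FX1 FX2]].
  destruct (cop_pair HY (idm A) y) as [fY [FY1 FY2]].
  destruct (pb_exists Hlim rX rY) as [T [pr1 [pr2 HP]]].
  pose proof (proj1 HP) as HP1.
  destruct (cop3_pair H3 j1 j2 (zr Hpt Y SX)) as [c1 [C11 [C12 C13]]].
  destruct (cop3_pair H3 l1 (zr Hpt X SY) l2) as [c2 [C21 [C22 C23]]].
  destruct (pb_pair HP (q1 := c1) (q2 := c2)) as [phi [Phi1 Phi2]].
  { apply (cop3_ext H3); rn.
    - rw C11; rw C21; rw RX1; rw RY1; auto.
    - rw C12; rw C22; zz.
    - rw C13; rw C23; zz. }
  destruct (kernel_exists Hpt Hlim phi) as [K [k Hk]].
  destruct (cop3_pair H3 (idm A) x y) as [c [CC1 [CC2 CC3]]].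
  assert (Hck : is_zero_arrow (c ∘ k)).
  { destruct (Hc S i1 i2 i3 H3 SX j1 j2 HX SY l1 l2 HY rX RX1 RX2 rY RY1 RY2 T pr1 pr2 HP phi)
      with (K := K) (k := k) (c := c) as [I [e [m [[Ef _] HI]]]]; auto.
    - rewrite Phi1; auto.
    - rewrite Phi1, C12; auto.
    - rewrite Phi1, C13; apply zr_zero.
    - rewrite Phi2; auto.
    - rewrite Phi2, C22; apply zr_zero.
    - rewrite Phi2; auto.
    - rewrite Ef. apply zero_through; auto. }
  destruct (cop_pair HX i1 i2) as [gX [GX1 GX2]].
  destruct (cop_pair HY i1 i3) as [gY [GY1 GY2]].
  assert (PG1 : pr1 ∘ (phi ∘ gX) = idm SX).
  { apply (cop_ext HX); rn; [rw GX1; rw Phi1; rw C11 | rw GX2; rw Phi1; rw C12]; auto. }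
  assert (PG2 : pr2 ∘ (phi ∘ gX) = l1 ∘ rX).
  { apply (cop_ext HX); rn; [rw GX1; rw Phi2; rw C21; rw RX1; auto | rw GX2; rw Phi2; rw C22; zz]. }
  assert (PG3 : pr2 ∘ (phi ∘ gY) = idm SY).
  { apply (cop_ext HY); rn; [rw GY1; rw Phi2; rw C21 | rw GY2; rw Phi2; rw C23]; auto. }
  assert (PG4 : pr1 ∘ (phi ∘ gY) = j1 ∘ rY).
  { apply (cop_ext HY); rn; [rw GY1; rw Phi1; rw C11; rw RY1; auto | rw GY2; rw Phi1; rw C13; zz]. }
  assert (CG1 : c ∘ gX = fX).
  { apply (cop_ext HX); rn; [rw GX1; rw CC1; rw FX1 | rw GX2; rw CC2; rw FX2]; auto. }
  assert (CG2 : c ∘ gY = fY).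
  { apply (cop_ext HY); rn; [rw GY1; rw CC1; rw FY1 | rw GY2; rw CC3; rw FY2]; auto. }
  assert (EX : qx ∘ fX = qx ∘ rX).
  { apply (cop_ext HX); rn; [rw FX1; rw RX1; auto | rw FX2; zz]. }
  assert (EY : qy ∘ rY = qy ∘ fY).
  { apply (cop_ext HY); rn; [rw FY1; rw RY1; auto | rw FY2; zz]. }
  destruct (pb_pair HPX EX) as [al [A1 A2]].
  destruct (pb_pair HPY EY) as [be [B1 B2]].
  destruct (A3_pair HA3 (b1 := fX ∘ pr1) (b2 := rX ∘ pr1) (b3 := fY ∘ pr2)) as [th [Th1 [Th2 Th3]]].
  { rw EX; auto. }
  { rw HP1; rw EY; auto. }
  destruct (A3_pair HA3 (b1:=px1) (b2:=px2) (b3:=px2) (proj1 HPX) eq_refl) as [sR [R1 [R2 R3]]].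
  destruct (A3_pair HA3 (b1:=py1) (b2:=py1) (b3:=py2) eq_refl (proj1 HPY)) as [sS [S1 [S2 S3]]].
  destruct (pb_pair HPY (q1:=a2) (q2:=a3) (proj1 (proj2 HA3))) as [rho [P1 P2]].
  assert (Hrs : rho ∘ sS = idm PY).
  { apply (pb_ext HPY); rn; [rw P1; rw S2| rw P2; rw S3]; auto. }
  assert (I1 : sR ∘ al = th ∘ (phi ∘ gX)).
  { apply (A3_ext HA3); rn.
    - rw R1; rw A1; rw Th1; rw PG1; auto.
    - rw R2; rw A2; rw Th2; rw PG1; auto.
    - rw R3; rw A2; rw Th3; rw PG2; rw FY1; auto. }
  assert (I2 : sS ∘ be = th ∘ (phi ∘ gY)).
  { apply (A3_ext HA3); rn.
    - rw S1; rw B1; rw Th1; rw PG4; rw FX1; auto.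
    - rw S2; rw B1; rw Th2; rw PG4; rw RX1; auto.
    - rw S3; rw B2; rw Th3; rw PG3; auto. }
  assert (RegA : is_regular_epi al).
  { apply (kp_regepi HC (s1:=j1) (s2:=j2) HPX KerX Rex); rn.
    - rw A1; rw FX1; auto.
    - rw A2; rw RX1; auto.
    - rw A1; rw FX2; rewrite Fx; auto.
    - rw A2; zt. }
  assert (RegB : is_regular_epi be).
  { apply (kp_regepi HC (s1:=l1) (s2:=l2) (pb_sym HPY) KerY Rey); rn.
    - rw B2; rw FY1; auto.
    - rw B1; rw RY1; auto.
    - rw B2; rw FY2; rewrite Fy; auto.
    - rw B1; zt. }
  assert (RegPhi : is_regular_epi phi).
  { apply (extremal_regular HC). intros M mm t Hmm Hphi.
    destruct (kernel_exists Hpt Hlim pr2) as [L [kk Hkk]].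
    apply (L2_ext HC PG3 Hkk Hmm).
    - exists (t ∘ gY). rewrite cA, <- Hphi; auto.
    - destruct (kernel_exists Hpt Hlim rX) as [Kr [kr Hkr]].
      destruct (kernel_fact Hkr (g := pr1 ∘ kk)) as [w Hw].
      { rw HP1. pose proof (proj1 Hkk). zt. }
      exists (t ∘ (gX ∘ (kr ∘ w))). rewrite cA, <- Hphi. rn.
      pose proof (proj1 Hkk). pose proof (proj1 Hkr).
      apply (pb_ext HP); rn.
      + rw PG1; rw Hw; auto.
      + rw PG2; zz. }
  assert (RegTh : is_regular_epi th).
  { apply (extremal_regular HC). intros M mm t Hmm Hth.
    destruct (kernel_exists Hpt Hlim rho) as [L [kk Hkk]].
    apply (L2_ext HC Hrs Hkk Hmm).
    - apply (regepi_strong (a := t ∘ (phi ∘ gY)) (b := sS) RegB Hmm). rewrite I2, Hth; rn; auto.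
    - destruct (regepi_strong (a := t ∘ (phi ∘ gX)) (b := sR) RegA Hmm) as [d Hd].
      { rewrite I1, Hth; rn; auto. }
      destruct (pb_pair HPX (q1:=a1 ∘ kk) (q2:=a2 ∘ kk)) as [w [W1 W2]].
      { rewrite !cA, (proj1 HA3); auto. }
      exists (d ∘ w). rw Hd. pose proof (proj1 Hkk).
      apply (A3_ext HA3); rn; [rw R1; auto|rw R2; auto|rw R3; rw W2].
      apply zeq; [rw (eq_sym P1)|rw (eq_sym P2)]; zt. }
  destruct (regepi_factor HC RegPhi Hk Hck) as [q Hq].
  destruct (kernel_exists Hpt Hlim th) as [Kt [kt Hkt]].
  pose proof (proj1 Hkt) as Hkt0.
  assert (Zb : is_zero_arrow (be ∘ (pr2 ∘ kt))).
  { replace (be ∘ (pr2 ∘ kt)) with (zr Hpt Kt PY). apply zr_zero.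
    apply (pb_ext HPY); rn.
    - rw B1; rw (eq_sym HP1); rw (eq_sym Th2); zz.
    - rw B2; rw (eq_sym Th3); zz. }
  destruct (kernel_exists Hpt Hlim be) as [Kb [kb Hkb]].
  pose proof (proj1 Hkb) as Hkb0.
  destruct (kernel_fact Hkb Zb) as [v Hv].
  destruct (kernel_fact Hkt (g := phi ∘ (gY ∘ kb))) as [s Hs].
  { rw (eq_sym I2); zt. }
  assert (Hvs : v ∘ s = idm Kb).
  { apply (kernel_mono Hkb). rn. rw Hv; rw Hs; rw PG3; auto. }
  destruct (kernel_exists Hpt Hlim v) as [Kv [kv Hkv]].
  pose proof (proj1 Hkv) as Hkv0.
  assert (Zq : is_zero_arrow (q ∘ kt)).
  { apply (L2_zero HC Hvs Hkv); rn.
    - rw Hs; rw Hq; rw CG2; rw (eq_sym B2); zt.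
    - assert (E : kt ∘ kv = phi ∘ (gX ∘ (pr1 ∘ (kt ∘ kv)))).
      { apply (pb_ext HP); rn.
        - rw PG1; auto.
        - rw (eq_sym Hv); rw PG2; rw HP1; rw (eq_sym Hv); zz. }
      rewrite E. rw Hq; rw CG1; rw (eq_sym Th1); zt. }
  destruct (regepi_factor HC RegTh Hkt Zq) as [p Hp].
  exists p. split.
  - intros t T1 T2 T3. apply (regepi_epi RegA).
    assert (Et : t ∘ al = th ∘ (phi ∘ gX)).
    { apply (A3_ext HA3); rn.
      - rw T1; rw A1; rw Th1; rw PG1; auto.
      - rw T2; rw A2; rw Th2; rw PG1; auto.
      - rw T3; rw A2; rw Th3; rw PG2; rw FY1; auto. }
    rn. rw Et; rw Hp; rw Hq; rw CG1; rw A1; auto.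
  - intros t T1 T2 T3. apply (regepi_epi RegB).
    assert (Et : t ∘ be = th ∘ (phi ∘ gY)).
    { apply (A3_ext HA3); rn.
      - rw T1; rw B1; rw Th1; rw PG4; rw FX1; auto.
      - rw T2; rw B1; rw Th2; rw PG4; rw RX1; auto.
      - rw T3; rw B2; rw Th3; rw PG3; auto. }
    rn. rw Et; rw Hp; rw Hq; rw CG2; rw B2; auto.
Qed.

End CA.

Theorem corollary2p6 (C : Category) (HC : homological C)
    (HF : has_finite_colimits C)
    (X Y A : C) (x : Hom X A) (y : Hom Y A)
    (Hx : image_is_normal_mono x) (Hy : image_is_normal_mono y) :
  (admits_pregroupoid x y <-> admits_unique_pregroupoid x y) /\
  (admits_pregroupoid x y <-> commutator1_is_zero x y).
Proof.
  split; split.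
  - intros Ha QX qx QY qy Hqx Hqy A3 a1 a2 a3 HA3 PX px1 px2 HPX PY py1 py2 HPY.
    destruct (Ha QX qx QY qy Hqx Hqy A3 a1 a2 a3 HA3 PX px1 px2 HPX PY py1 py2 HPY) as [p Hp].
    exists p. split; auto. intros p' Hp'. eapply part_uniq; eauto.
  - intros Hu QX qx QY qy Hqx Hqy A3 a1 a2 a3 HA3 PX px1 px2 HPX PY py1 py2 HPY.
    destruct (Hu QX qx QY qy Hqx Hqy A3 a1 a2 a3 HA3 PX px1 px2 HPX PY py1 py2 HPY) as [p [Hp _]].
    eauto.
  - apply (part_ac HC HF).
  - apply (part_ca HC HF Hx Hy).
Qed.
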